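(* Let $q_1,q_2,q_3,q_4\in\widehat{\mathbb H}$ be four distinct points and let $q'_1,q'_2,q'_3\in\widehat{\mathbb H}$ be three distinct points. Then the set $$S=\{\pi(\gamma)(q_4):\gamma\in GL(2,\mathbb H),\ \pi(\gamma)(q_n)=q'_n,\ n=1,2,3\}\subset\widehat{\mathbb H}$$ is either a 2-sphere, a 2-plane, or a single point. Moreover, $S$ is a single point if and only if $Q(q_1,q_2,q_3,q_4)$ is real.
   Context: $\mathbb H$ denotes the quaternions, $\widehat{\mathbb H}=\mathbb H\cup\{\infty\}$, identified with $\mathbb R^4$ plus a point at infinity (2-spheres and 2-planes are meant in $\mathbb H\cong\mathbb R^4$). $GL(2,\mathbb H)$ acts on $\widehat{\mathbb H}$ by $\pi(\gamma)(q)=(aq+b)(cq+d)^{-1}$ for $\gamma=\begin{pmatrix}a&b\\c&d\end{pmatrix}$. For four distinct points the cross-ratio is $Q(q_1,q_2,q_3,q_4)=(q_2-q_1)^{-1}(q_4-q_1)(q_4-q_3)^{-1}(q_2-q_3)$, defined by taking limits if some $q_n=\infty$. *)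

(* Defs.v *)
From HB Require Import structures.
From mathcomp Require Import all_boot all_order all_algebra.
From mathcomp Require Import reals.
Set Implicit Arguments.
Unset Strict Implicit.
Unset Printing Implicit Defensive.
Import Order.TTheory GRing.Theory Num.Theory.
Local Open Scope ring_scope.

Section Quaternions.
Variable R : realType.

(** Quaternions H, identified with R^4 (row vectors): q = q0 + q1 i + q2 j + q3 k. *)
Definition quat := 'rV[R]_4.

Definition qmk (a b c d : R) : quat := \row_(i < 4) nth 0 [:: a; b; c; d] i.
Definition qc (q : quat) (k : nat) : R := q ord0 (inord k).

Definition qmul (p q : quat) : quat :=
  let a1 := qc p 0 in let b1 := qc p 1 in let c1 := qc p 2 in let d1 := qc p 3 in
  let a2 := qc q 0 in let b2 := qc q 1 in let c2 := qc q 2 in let d2 := qc q 3 in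
  qmk (a1*a2 - b1*b2 - c1*c2 - d1*d2)
      (a1*b2 + b1*a2 + c1*d2 - d1*c2)
      (a1*c2 - b1*d2 + c1*a2 + d1*b2)
      (a1*d2 + b1*c2 - c1*b2 + d1*a2).

Definition qone : quat := qmk 1 0 0 0.
Definition qconj (q : quat) : quat := qmk (qc q 0) (- qc q 1) (- qc q 2) (- qc q 3).
Definition qnorm2 (q : quat) : R := \sum_(i < 4) q ord0 i ^+ 2.
Definition qinv (q : quat) : quat := (qnorm2 q)^-1 *: qconj q.
Definition qreal (q : quat) : Prop := qc q 1 = 0 /\ qc q 2 = 0 /\ qc q 3 = 0.

(** widehat H = H ∪ {∞}, with None = ∞ *)
Definition hpoint := option quat.

Record qmat := QMat { ma : quat; mb : quat; mc : quat; md : quat }.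

Definition qmatmul (g h : qmat) : qmat :=
  QMat (qmul (ma g) (ma h) + qmul (mb g) (mc h))
       (qmul (ma g) (mb h) + qmul (mb g) (md h))
       (qmul (mc g) (ma h) + qmul (md g) (mc h))
       (qmul (mc g) (mb h) + qmul (md g) (md h)).

Definition qmat1 : qmat := QMat qone 0 0 qone.

Definition inGL2 (g : qmat) : Prop :=
  exists h, qmatmul g h = qmat1 /\ qmatmul h g = qmat1.

(** pi(gamma)(q) = (aq+b)(cq+d)^{-1}, extended by limits to widehat H *)
Definition mobius (g : qmat) (x : hpoint) : hpoint :=
  match x with
  | Some q => let den := qmul (mc g) q + md g in
              if den == 0 then None
              else Some (qmul (qmul (ma g) q + mb g) (qinv den))
  | None => if mc g == 0 then None else Some (qmul (ma g) (qinv (mc g)))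
  end.

(** Cross-ratio Q(q1,q2,q3,q4) = (q2-q1)^{-1}(q4-q1)(q4-q3)^{-1}(q2-q3),
    extended by limits; only meaningful for distinct points. *)
Definition crossratio (x1 x2 x3 x4 : hpoint) : quat :=
  match x1, x2, x3, x4 with
  | Some a, Some b, Some c, Some d =>
      qmul (qmul (qmul (qinv (b - a)) (d - a)) (qinv (d - c))) (b - c)
  | None, Some b, Some c, Some d => qmul (qinv (d - c)) (b - c)
  | Some a, None, Some c, Some d => qmul (d - a) (qinv (d - c))
  | Some a, Some b, None, Some d => qmul (qinv (b - a)) (d - a)
  | Some a, Some b, Some c, None => qmul (qinv (b - a)) (b - c)
  | _, _, _, _ => 0
  end.

(** A round 2-sphere in H = R^4: centre c, radius r > 0, lying in the affine
    3-space c + rowspace(M), M of rank 3. *)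
Definition is_2sphere (S : hpoint -> Prop) : Prop :=
  exists (c : quat) (r : R) (M : 'M[R]_(3, 4)),
    0 < r /\ \rank M = 3%N /\
    forall y, S y <-> exists u : 'rV[R]_3,
        y = Some (c + u *m M) /\ qnorm2 (u *m M) = r ^+ 2.

(** An affine 2-plane p + rowspace(M) (M of rank 2) of H, closed up by ∞. *)
Definition is_2plane (S : hpoint -> Prop) : Prop :=
  exists (p : quat) (M : 'M[R]_(2, 4)),
    \rank M = 2%N /\
    forall y, S y <-> (y = None \/ exists u : 'rV[R]_2, y = Some (p + u *m M)).

Definition is_point (S : hpoint -> Prop) : Prop :=
  exists p : hpoint, forall y, S y <-> y = p.

End Quaternions.

(* Main.v *)
Require Import Defs.
From HB Require Import structures.
From mathcomp Require Import all_boot all_order all_algebra.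
From mathcomp Require Import reals ring lra.
Import Order.TTheory GRing.Theory Num.Theory.
Set Implicit Arguments.
Unset Strict Implicit.
Unset Printing Implicit Defensive.
Local Open Scope ring_scope.


Section Q.
Variable R : realType.
Local Notation quat := (quat R).
Local Notation qc := (@qc R).
Local Notation qmk := (@qmk R).
Local Notation qmul := (@qmul R).
Local Notation qinv := (@qinv R).
Local Notation qconj := (@qconj R).
Local Notation qone := (@qone R).
Local Notation qnorm2 := (@qnorm2 R).

Lemma qmk0 a b c d : qc (qmk a b c d) 0 = a.
Proof. by rewrite /qc /qmk mxE inordK. Qed.
Lemma qmk1 a b c d : qc (qmk a b c d) 1 = b.
Proof. by rewrite /qc /qmk mxE inordK. Qed.
Lemma qmk2 a b c d : qc (qmk a b c d) 2 = c.
Proof. by rewrite /qc /qmk mxE inordK. Qed.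
Lemma qmk3 a b c d : qc (qmk a b c d) 3 = d.
Proof. by rewrite /qc /qmk mxE inordK. Qed.

Lemma qeq (x y : quat) : qc x 0 = qc y 0 -> qc x 1 = qc y 1 -> qc x 2 = qc y 2 ->
  qc x 3 = qc y 3 -> x = y.
Proof.
move=> h0 h1 h2 h3; apply/matrixP => i j; rewrite (ord1 i).
have E k (Hk : (k < 4)%N) : Ordinal Hk = inord k :> 'I_4 by apply/val_inj; rewrite /= inordK.
case: j => [[|[|[|[|n]]]] Hj] //; by rewrite E.
Qed.

Lemma qc_ord (x : quat) (i : 'I_4) : x ord0 i = qc x i.
Proof. by rewrite /qc inord_val. Qed.
Lemma qnorm2E (x : quat) : qnorm2 x = qc x 0 ^+ 2 + qc x 1 ^+ 2 + qc x 2 ^+ 2 + qc x 3 ^+ 2.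
Proof. rewrite /qnorm2 !big_ord_recl big_ord0 !qc_ord /=. ring. Qed.

Lemma qcD (x y : quat) k : qc (x + y) k = qc x k + qc y k.
Proof. by rewrite /qc mxE. Qed.
Lemma qcN (x : quat) k : qc (- x) k = - qc x k.
Proof. by rewrite /qc mxE. Qed.
Lemma qcB (x y : quat) k : qc (x - y) k = qc x k - qc y k.
Proof. by rewrite qcD qcN. Qed.
Lemma qcZ a (x : quat) k : qc (a *: x) k = a * qc x k.
Proof. by rewrite /qc mxE. Qed.
Lemma qc0 k : qc 0 k = 0.
Proof. by rewrite /qc mxE. Qed.

Definition dot (x y : quat) : R :=
  qc x 0 * qc y 0 + qc x 1 * qc y 1 + qc x 2 * qc y 2 + qc x 3 * qc y 3.

Lemma qcM0 p q : qc (qmul p q) 0 = qc p 0 * qc q 0 - qc p 1 * qc q 1 - qc p 2 * qc q 2 - qc p 3 * qc q 3.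
Proof. by rewrite /qmul qmk0. Qed.
Lemma qcM1 p q : qc (qmul p q) 1 = qc p 0 * qc q 1 + qc p 1 * qc q 0 + qc p 2 * qc q 3 - qc p 3 * qc q 2.
Proof. by rewrite /qmul qmk1. Qed.
Lemma qcM2 p q : qc (qmul p q) 2 = qc p 0 * qc q 2 - qc p 1 * qc q 3 + qc p 2 * qc q 0 + qc p 3 * qc q 1.
Proof. by rewrite /qmul qmk2. Qed.
Lemma qcM3 p q : qc (qmul p q) 3 = qc p 0 * qc q 3 + qc p 1 * qc q 2 - qc p 2 * qc q 1 + qc p 3 * qc q 0.
Proof. by rewrite /qmul qmk3. Qed.
Lemma qcC0 q : qc (qconj q) 0 = qc q 0. Proof. by rewrite /qconj qmk0. Qed.
Lemma qcC1 q : qc (qconj q) 1 = - qc q 1. Proof. by rewrite /qconj qmk1. Qed.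
Lemma qcC2 q : qc (qconj q) 2 = - qc q 2. Proof. by rewrite /qconj qmk2. Qed.
Lemma qcC3 q : qc (qconj q) 3 = - qc q 3. Proof. by rewrite /qconj qmk3. Qed.
Lemma qc10 : qc qone 0 = 1. Proof. by rewrite /qone qmk0. Qed.
Lemma qc11 : qc qone 1 = 0. Proof. by rewrite /qone qmk1. Qed.
Lemma qc12 : qc qone 2 = 0. Proof. by rewrite /qone qmk2. Qed.
Lemma qc13 : qc qone 3 = 0. Proof. by rewrite /qone qmk3. Qed.
Lemma qcI q k : qc (qinv q) k = (qnorm2 q)^-1 * qc (qconj q) k.
Proof. by rewrite /qinv qcZ. Qed.

Ltac qE := repeat progress rewrite ?qcI ?qnorm2E ?qcD ?qcN ?qcB ?qcZ ?qc0 ?qcM0 ?qcM1 ?qcM2 ?qcM3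
   ?qcC0 ?qcC1 ?qcC2 ?qcC3 ?qc10 ?qc11 ?qc12 ?qc13 ?qmk0 ?qmk1 ?qmk2 ?qmk3 /dot.
Ltac qring := apply qeq; qE; ring.

Lemma qmA x y z : qmul x (qmul y z) = qmul (qmul x y) z. Proof. qring. Qed.
Lemma qmulDl x y z : qmul (x + y) z = qmul x z + qmul y z. Proof. qring. Qed.
Lemma qmulDr x y z : qmul x (y + z) = qmul x y + qmul x z. Proof. qring. Qed.
Lemma qmulBl x y z : qmul (x - y) z = qmul x z - qmul y z. Proof. qring. Qed.
Lemma qmulBr x y z : qmul x (y - z) = qmul x y - qmul x z. Proof. qring. Qed.
Lemma qmulNl x y : qmul (- x) y = - qmul x y. Proof. qring. Qed.
Lemma qmulNr x y : qmul x (- y) = - qmul x y. Proof. qring. Qed.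
Lemma qmulZl a x y : qmul (a *: x) y = a *: qmul x y. Proof. qring. Qed.
Lemma qmulZr a x y : qmul x (a *: y) = a *: qmul x y. Proof. qring. Qed.
Lemma qmul1q x : qmul qone x = x. Proof. qring. Qed.
Lemma qmulq1 x : qmul x qone = x. Proof. qring. Qed.
Lemma qmul0q x : qmul 0 x = 0. Proof. qring. Qed.
Lemma qmulq0 x : qmul x 0 = 0. Proof. qring. Qed.
Lemma qnormM x y : qnorm2 (qmul x y) = qnorm2 x * qnorm2 y. Proof. qE; ring. Qed.
Lemma qnorm_conj x : qnorm2 (qconj x) = qnorm2 x. Proof. qE; ring. Qed.
Lemma qmul_conj x : qmul x (qconj x) = qnorm2 x *: qone. Proof. qring. Qed.
Lemma qmul_conjl x : qmul (qconj x) x = qnorm2 x *: qone. Proof. qring. Qed.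
Lemma qnorm_ge0 x : 0 <= qnorm2 x.
Proof. rewrite qnorm2E; do ! (apply: addr_ge0 || apply: sqr_ge0). Qed.

Lemma qnorm_eq0 x : (qnorm2 x == 0) = (x == 0).
Proof.
apply/eqP/eqP => [h|->]; last by qE; ring.
move: h; rewrite qnorm2E => h.
have h0 := sqr_ge0 (qc x 0); have h1 := sqr_ge0 (qc x 1).
have h2 := sqr_ge0 (qc x 2); have h3 := sqr_ge0 (qc x 3).
have e0 : qc x 0 = 0 by apply/eqP; rewrite -sqrf_eq0; apply/eqP; lra.
have e1 : qc x 1 = 0 by apply/eqP; rewrite -sqrf_eq0; apply/eqP; lra.
have e2 : qc x 2 = 0 by apply/eqP; rewrite -sqrf_eq0; apply/eqP; lra.
have e3 : qc x 3 = 0 by apply/eqP; rewrite -sqrf_eq0; apply/eqP; lra.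
by apply qeq; rewrite qc0.
Qed.

Lemma qnorm_neq0 x : x != 0 -> qnorm2 x != 0.
Proof. by rewrite qnorm_eq0. Qed.

Lemma qmulV x : x != 0 -> qmul x (qinv x) = qone.
Proof.
move=> /qnorm_neq0 h; rewrite /qinv qmulZr qmul_conj scalerA mulVf //.
by rewrite scale1r.
Qed.
Lemma qmulVl x : x != 0 -> qmul (qinv x) x = qone.
Proof.
move=> /qnorm_neq0 h; rewrite /qinv qmulZl qmul_conjl scalerA mulVf //.
by rewrite scale1r.
Qed.
Lemma qinv0 : qinv 0 = 0.
Proof. have e : qconj 0 = 0 by qring. by rewrite /qinv e scaler0. Qed.

Lemma qone_neq0 : qone != 0.
Proof. by apply/eqP => /(congr1 (fun x => qc x 0)); rewrite qc10 qc0; apply/eqP; rewrite oner_eq0. Qed.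

Lemma qmul_eq0 x y : qmul x y = 0 -> x = 0 \/ y = 0.
Proof.
move=> /(congr1 qnorm2); rewrite qnormM => /eqP.
have -> : qnorm2 0 = 0 by qE; ring.
rewrite mulf_eq0 !qnorm_eq0 => /orP[] /eqP; auto.
Qed.

Lemma qmul_neq0 x y : x != 0 -> y != 0 -> qmul x y != 0.
Proof. by move=> /eqP hx /eqP hy; apply/eqP => /qmul_eq0 []. Qed.

Lemma qmulKl a x : a != 0 -> qmul (qinv a) (qmul a x) = x.
Proof. by move=> h; rewrite qmA qmulVl // qmul1q. Qed.
Lemma qmulKr a x : a != 0 -> qmul (qmul x a) (qinv a) = x.
Proof. by move=> h; rewrite -qmA qmulV // qmulq1. Qed.
Lemma qmulKl' a x : a != 0 -> qmul a (qmul (qinv a) x) = x.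
Proof. by move=> h; rewrite qmA qmulV // qmul1q. Qed.
Lemma qmulKr' a x : a != 0 -> qmul (qmul x (qinv a)) a = x.
Proof. by move=> h; rewrite -qmA qmulVl // qmulq1. Qed.

Lemma qinv_uniq a b : qmul a b = qone -> b = qinv a.
Proof.
move=> h; have ha : a != 0.
  by apply/eqP => ha; move: h; rewrite ha qmul0q => /esym/eqP; rewrite (negbTE qone_neq0).
by rewrite -(qmulKl b ha) h qmulq1.
Qed.

Lemma qinv_neq0 a : a != 0 -> qinv a != 0.
Proof. move=> h; apply/eqP => e; move: (qmulV h); rewrite e qmulq0 => /esym/eqP.
by rewrite (negbTE qone_neq0). Qed.

Lemma qinvK a : qinv (qinv a) = a.
Proof.
have [->|h] := eqVneq a 0; first by rewrite !qinv0.
by rewrite -(qinv_uniq (qmulVl h)).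
Qed.

Lemma qinvM a b : qinv (qmul a b) = qmul (qinv b) (qinv a).
Proof.
have [->|ha] := eqVneq a 0; first by rewrite qmul0q qinv0 qmulq0.
have [->|hb] := eqVneq b 0; first by rewrite qmulq0 qinv0 qmul0q.
symmetry; apply: qinv_uniq.
by rewrite qmA -[qmul (qmul a b) _]qmA qmulV // qmulq1 qmulV.
Qed.

Lemma qinv1 : qinv qone = qone.
Proof. by rewrite -(qinv_uniq (qmul1q qone)). Qed.

Lemma qinv_inj a b : qinv a = qinv b -> a = b.
Proof. by move=> h; rewrite -(qinvK a) h qinvK. Qed.

End Q.


Ltac qE := repeat progress rewrite ?qcI ?qnorm2E ?qcD ?qcN ?qcB ?qcZ ?qc0 ?qcM0 ?qcM1 ?qcM2 ?qcM3
   ?qcC0 ?qcC1 ?qcC2 ?qcC3 ?qc10 ?qc11 ?qc12 ?qc13 ?qmk0 ?qmk1 ?qmk2 ?qmk3 /dot.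
Ltac qring := apply qeq; qE; ring.

Section C.
Variable R : realType.
Local Notation quat := (quat R).
Local Notation hpoint := (hpoint R).
Local Notation qmat := (qmat R).
Local Notation qmul := (@qmul R).
Local Notation qinv := (@qinv R).
Local Notation qone := (@qone R).
Local Notation qmatmul := (@qmatmul R).
Local Notation qmat1 := (@qmat1 R).
Local Notation mobius := (@mobius R).
Local Notation inGL2 := (@inGL2 R).

Definition proj (w : quat * quat) : hpoint := if w.2 == 0 then None else Some (qmul w.1 (qinv w.2)).
Definition act (g : qmat) (w : quat * quat) : quat * quat :=
  (qmul (ma g) w.1 + qmul (mb g) w.2, qmul (mc g) w.1 + qmul (md g) w.2).
Definition lift (x : hpoint) : quat * quat :=
  match x with Some q => (q, qone) | None => (qone, 0) end.

Lemma mobius_proj g x : mobius g x = proj (act g (lift x)).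
Proof.
case: x => [q|] /=; rewrite /proj /act /=.
  by rewrite !qmulq1.
by rewrite !qmulq1 !qmulq0 !addr0.
Qed.

Lemma proj_scale u v l : l != 0 -> proj (qmul u l, qmul v l) = proj (u, v).
Proof.
move=> hl; rewrite /proj /=.
have [->|hv] := eqVneq v 0; first by rewrite qmul0q eqxx.
rewrite (negbTE (qmul_neq0 hv hl)) qinvM qmA -[qmul (qmul u l) _]qmA qmulV //.
by rewrite qmulq1.
Qed.

Lemma act_scale g u v l :
  act g (qmul u l, qmul v l) = (qmul (act g (u, v)).1 l, qmul (act g (u, v)).2 l).
Proof. by rewrite /act /= !qmulDl !qmA. Qed.

Lemma lift_proj u v : (u, v) <> (0, 0) ->
  exists2 l, l != 0 & (u, v) = (qmul (lift (proj (u, v))).1 l, qmul (lift (proj (u, v))).2 l).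
Proof.
move=> h; rewrite /proj /=; have [ev|hv] := eqVneq v 0.
  subst v; have hu : u != 0 by apply/eqP => e; apply: h; rewrite e.
  idtac.
  by exists u => //=; rewrite qmul1q qmul0q.
by exists v => //=; rewrite qmulKr' // qmul1q.
Qed.

Lemma proj_act g u v : (u, v) <> (0, 0) -> proj (act g (u, v)) = mobius g (proj (u, v)).
Proof.
move=> /lift_proj [l hl e]; rewrite mobius_proj.
move: e; case: (lift (proj (u, v))) => a b /= ->; rewrite act_scale.
by case: (act g (a, b)) => c d /=; rewrite proj_scale.
Qed.

Definition qmat_eq (g h : qmat) := g = h.

Lemma act_mul g h w : act (qmatmul g h) w = act g (act h w).
Proof.
case: g h w => [a b c d] [a' b' c' d'] [u v]; rewrite /act /qmatmul /=.
congr pair; rewrite !qmulDl !qmulDr !qmA; (apply qeq; qE; ring).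
Qed.

Lemma act1 w : act qmat1 w = w.
Proof. case: w => u v; rewrite /act /=; congr pair; qring. Qed.

Lemma qmatmulA g h k : qmatmul g (qmatmul h k) = qmatmul (qmatmul g h) k.
Proof.
case: g h k => [a b c d] [a' b' c' d'] [a'' b'' c'' d'']; rewrite /qmatmul /=.
congr QMat; qring.
Qed.

Lemma GL_act0 h w : inGL2 h -> act h w = (0, 0) -> w = (0, 0).
Proof.
move=> [h' [_ e]] ew; rewrite -(act1 w) -e act_mul ew /act /=.
by rewrite !qmulq0 addr0.
Qed.

Lemma lift_neq0 x : lift x <> (0, 0).
Proof. case: x => [q|] [] => [_|] /eqP; by rewrite (negbTE (qone_neq0 R)). Qed.

Lemma mobius_mul g h x : inGL2 h -> mobius (qmatmul g h) x = mobius g (mobius h x).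
Proof.
move=> hh; rewrite !(mobius_proj _ x) act_mul.
have H : act h (lift x) <> (0,0) by move=> /(GL_act0 hh); apply: lift_neq0.
move: H; case: (act h (lift x)) => u v H.
by rewrite -proj_act.
Qed.

Lemma mobius1 x : mobius qmat1 x = x.
Proof. rewrite mobius_proj act1; case: x => [q|]; rewrite /proj /=; case: ifP => [/eqP e|/eqP e] //; [by move: (qone_neq0 R); rewrite e eqxx | by rewrite qinv1 qmulq1]. Qed.

Lemma GL_mul g h : inGL2 g -> inGL2 h -> inGL2 (qmatmul g h).
Proof.
move=> [g' [e1 e2]] [h' [f1 f2]]; exists (qmatmul h' g'); split.
  rewrite qmatmulA -(qmatmulA g) f1.
  have -> : qmatmul g qmat1 = g by case: g {e1 e2} => a b c d; rewrite /qmatmul /=; congr QMat; qring.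
  done.
rewrite qmatmulA -(qmatmulA h') e2.
have -> : qmatmul h' qmat1 = h' by case: h' {f1 f2} => a b c d; rewrite /qmatmul /=; congr QMat; qring.
done.
Qed.

Lemma mobius_inv g x y : inGL2 g -> mobius g x = y ->
  exists h, inGL2 h /\ mobius h y = x /\ forall z, mobius g (mobius h z) = z.
Proof.
move=> [h [e1 e2]] <-; exists h; split; first by exists g.
split; first by rewrite -mobius_mul ?e2 ?mobius1 //; exists h.
by move=> z; rewrite -mobius_mul ?e1 ?mobius1 //; exists g.
Qed.

Lemma mobius_inj g x y : inGL2 g -> mobius g x = mobius g y -> x = y.
Proof.
move=> [h [e1 e2]] e.
have G : inGL2 g by exists h.
by rewrite -(mobius1 x) -(mobius1 y) -e2 !mobius_mul // e.
Qed.

Definition mT (t : quat) : qmat := QMat qone t 0 qone.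
Definition mL (a : quat) : qmat := QMat a 0 0 qone.
Definition mR (a : quat) : qmat := QMat qone 0 0 (qinv a).
Definition mI : qmat := QMat 0 qone qone 0.
Definition mD (a : quat) : qmat := QMat a 0 0 a.

Lemma mT_GL t : inGL2 (mT t).
Proof. exists (mT (- t)); rewrite /qmatmul /=; split; congr QMat; qring. Qed.
Lemma mL_GL a : a != 0 -> inGL2 (mL a).
Proof.
move=> h; exists (mL (qinv a)); rewrite /qmatmul /=; split; congr QMat;
 rewrite ?qmulV ?qmulVl // ?qmulq0 ?qmul0q ?qmulq1 ?qmul1q ?addr0 ?add0r //.
Qed.
Lemma mR_GL a : a != 0 -> inGL2 (mR a).
Proof.
move=> h; exists (mR (qinv a)); rewrite /qmatmul /=; split; congr QMat;
 rewrite ?qinvK ?qmulV ?qmulVl // ?qmulq0 ?qmul0q ?qmulq1 ?qmul1q ?addr0 ?add0r //.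
Qed.
Lemma mI_GL : inGL2 mI.
Proof. exists mI; rewrite /qmatmul /=; split; congr QMat; qring. Qed.
Lemma mD_GL a : a != 0 -> inGL2 (mD a).
Proof.
move=> h; exists (mD (qinv a)); rewrite /qmatmul /=; split; congr QMat;
 rewrite ?qmulV ?qmulVl // ?qmulq0 ?qmul0q ?qmulq1 ?qmul1q ?addr0 ?add0r //.
Qed.

Lemma mT_S t q : mobius (mT t) (Some q) = Some (q + t).
Proof.
rewrite /mobius /= qmul0q add0r (negbTE (qone_neq0 R)) qinv1 qmulq1 qmul1q.
by rewrite addrC.
Qed.
Lemma mT_N t : mobius (mT t) None = None.
Proof. by rewrite /mobius /= eqxx. Qed.
Lemma mL_S a q : mobius (mL a) (Some q) = Some (qmul a q).
Proof. by rewrite /mobius /= qmul0q add0r (negbTE (qone_neq0 R)) qinv1 qmulq1 addr0. Qed.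
Lemma mL_N a : mobius (mL a) None = None.
Proof. by rewrite /mobius /= eqxx. Qed.
Lemma mR_S a q : a != 0 -> mobius (mR a) (Some q) = Some (qmul q a).
Proof.
move=> h; rewrite /mobius /= qmul0q add0r (negbTE (qinv_neq0 h)) qinvK addr0.
by rewrite qmul1q.
Qed.
Lemma mR_N a : mobius (mR a) None = None.
Proof. by rewrite /mobius /= eqxx. Qed.
Lemma mI_S q : mobius mI (Some q) = if q == 0 then None else Some (qinv q).
Proof. by rewrite /mobius /= qmul0q add0r qmul1q addr0 qmul1q. Qed.
Lemma mI_N : mobius mI None = Some 0.
Proof. by rewrite /mobius /= (negbTE (qone_neq0 R)) qmul0q. Qed.
Lemma mD_S a q : a != 0 -> mobius (mD a) (Some q) = Some (qmul (qmul a q) (qinv a)).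
Proof. by move=> h; rewrite /mobius /= qmul0q add0r (negbTE h) addr0. Qed.

End C.



Section D.
Variable R : realType.
Local Notation quat := (quat R).
Local Notation hpoint := (hpoint R).
Local Notation qmat := (qmat R).
Local Notation qmul := (@qmul R).
Local Notation qinv := (@qinv R).
Local Notation qone := (@qone R).
Local Notation qmatmul := (@qmatmul R).
Local Notation qmat1 := (@qmat1 R).
Local Notation mobius := (@mobius R).
Local Notation inGL2 := (@inGL2 R).
Local Notation mI := (@mI R).

Lemma subr_neq0 (a b : quat) : Some a <> Some b -> a - b != 0.
Proof. by move=> h; rewrite subr_eq0; apply/eqP => e; apply: h; rewrite e. Qed.

Lemma stab g : inGL2 g -> mobius g (Some 0) = Some 0 -> mobius g (Some qone) = Some qone ->
  mobius g None = None -> exists2 a, a != 0 & forall q, mobius g (Some q) = Some (qmul (qmul a q) (qinv a)).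
Proof.
case: g => a b c d _; rewrite /mobius /= => e0 e1.
case: eqP => // ec _; subst c.
move: e0 e1; rewrite !qmulq0 !add0r qmul0q add0r qmulq1.
case: eqP => // /eqP hd [e0] [e1].
have eb : b = 0 by rewrite -(qmulKr' b hd) e0 qmul0q.
move: e1; rewrite eb addr0 => e1.
have ea : a = d by rewrite -(qmulKr' a hd) e1 qmul1q.
subst; exists d => // q; rewrite qmul0q add0r (negbTE hd) addr0 //.
Qed.

Definition crossratioR := @crossratio R.

Ltac gl := repeat match goal with
  | |- inGL2 (qmatmul _ _) => apply: GL_mul
  | |- inGL2 (mT _) => apply: mT_GL
  | |- inGL2 mI => apply: mI_GL
  | |- inGL2 (mL _) => apply: mL_GL
  | |- inGL2 (mR _) => apply: mR_GL
  | |- inGL2 (mD _) => apply: mD_GL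
  end.

Lemma eq_mod (L Rr D : quat) : L - Rr = D -> D = 0 -> L = Rr.
Proof. by move=> e h; apply/eqP; rewrite -subr_eq0 e h. Qed.

Section B4.
Variables a b c : quat.
Hypothesis ba : b - a != 0.
Hypothesis bc : b - c != 0.
Hypothesis ca : c - a != 0.
Definition B4 := qmatmul (mT (qmul (qinv (b - a)) (b - c))) (qmatmul (mL (qmul (qinv (b - a)) (c - a)))
     (qmatmul (mR (b - c)) (qmatmul mI (mT (- c))))).
Lemma B4_GL : inGL2 B4.
Proof. rewrite /B4; gl => //; apply: qmul_neq0 => //; exact: qinv_neq0. Qed.
Lemma B4_map x : mobius B4 x = match x with
  | Some y => if y - c == 0 then None else
      Some (qmul (qmul (qinv (b - a)) (c - a)) (qmul (qinv (y - c)) (b - c)) + qmul (qinv (b - a)) (b - c))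
  | None => Some (qmul (qinv (b - a)) (b - c)) end.
Proof.
rewrite /B4 !mobius_mul; try (by gl => //; apply: qmul_neq0 => //; exact: qinv_neq0); try exact: mT_GL.
case: x => [y|]; rewrite ?mT_S ?mT_N ?mI_S ?mI_N.
  by case: ifP => _; rewrite ?mR_N ?mL_N ?mT_N ?mR_S ?mL_S ?mT_S.
by rewrite mR_S // mL_S mT_S qmul0q qmulq0 add0r.
Qed.
End B4.

Lemma normalize (q1 q2 q3 q4 : hpoint) :
  q1 <> q2 -> q1 <> q3 -> q1 <> q4 -> q2 <> q3 -> q2 <> q4 -> q3 <> q4 ->
  exists B, inGL2 B /\ mobius B q1 = Some 0 /\ mobius B q2 = Some qone /\
     mobius B q3 = None /\ mobius B q4 = Some (crossratio q1 q2 q3 q4).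
Proof.
case: q1 => [a|]; case: q2 => [b|]; case: q3 => [c|]; case: q4 => [d|];
  move=> h12 h13 h14 h23 h24 h34;
  try (exfalso; first [exact: h12 erefl|exact: h13 erefl|exact: h14 erefl|exact: h23 erefl|exact: h24 erefl|exact: h34 erefl]).
-
  have ba := subr_neq0 (nesym h12); have ca := subr_neq0 (nesym h13);
  have bc := subr_neq0 h23; have ac := subr_neq0 h13; have dc := subr_neq0 (nesym h34).
  exists (B4 a b c); split; first exact: B4_GL.
  rewrite !(B4_map ba bc ca) (negbTE ac) (negbTE bc) (negbTE dc) subrr eqxx /crossratio.
  split; [|split; [|split]] => //; congr Some.
  + move: (qmulV ac); generalize (qinv (a - c)) => j hj.
    apply: (eq_mod (D := qmul (qinv (b - a)) (qmul (qone - qmul (a - c) j) (b - c)))).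
      by qring.
    by rewrite hj subrr qmul0q qmulq0.
  + move: (qmulVl bc) (qmulVl ba); generalize (qinv (b - c)) (qinv (b - a)) => j al hj hal.
    apply: (eq_mod (D := qmul (qmul al (c - a)) (qmul j (b - c) - qone) + (qmul al (b - a) - qone))).
      by qring.
    by rewrite hj hal subrr qmulq0 addr0.
  + move: (qmulV dc); generalize (qinv (d - c)) (qinv (b - a)) => j al hj.
    apply: (eq_mod (D := qmul al (qmul (qone - qmul (d - c) j) (b - c)))).
      by qring.
    by rewrite hj subrr qmul0q qmulq0.
-
  have ba := subr_neq0 (nesym h12); have ca := subr_neq0 (nesym h13);
  have bc := subr_neq0 h23; have ac := subr_neq0 h13.
  exists (B4 a b c); split; first exact: B4_GL.
  rewrite !(B4_map ba bc ca) (negbTE ac) (negbTE bc) subrr eqxx /crossratio.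
  split; [|split; [|split]] => //; congr Some.
  + move: (qmulV ac); generalize (qinv (a - c)) => j hj.
    apply: (eq_mod (D := qmul (qinv (b - a)) (qmul (qone - qmul (a - c) j) (b - c)))).
      by qring.
    by rewrite hj subrr qmul0q qmulq0.
  + move: (qmulVl bc) (qmulVl ba); generalize (qinv (b - c)) (qinv (b - a)) => j al hj hal.
    apply: (eq_mod (D := qmul (qmul al (c - a)) (qmul j (b - c) - qone) + (qmul al (b - a) - qone))).
      by qring.
    by rewrite hj hal subrr qmulq0 addr0.
-
  have ba := subr_neq0 (nesym h12).
  exists (qmatmul (mL (qinv (b - a))) (mT (- a))); split; first by gl => //; exact: qinv_neq0.
  rewrite !mobius_mul; try exact: mT_GL.
  by rewrite !mT_S mT_N mL_N !mL_S subrr qmulq0 qmulVl.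
-
  have ca := subr_neq0 (nesym h13); have ac := subr_neq0 h13; have dc := subr_neq0 (nesym h34).
  exists (qmatmul (mT qone) (qmatmul (mL (c - a)) (qmatmul mI (mT (- c))))); split; first by gl.
  rewrite !mobius_mul; try (by gl); try exact: mT_GL.
  rewrite !mT_S mT_N mI_N !mI_S (negbTE ac) (negbTE dc) subrr eqxx !mL_S mL_N !mT_S mT_N /crossratio.
  split; [|split; [|split]] => //; congr Some.
  + move: (qmulV ac); generalize (qinv (a - c)) => j hj.
    apply: (eq_mod (D := qone - qmul (a - c) j)); first by qring.
    by rewrite hj subrr.
  + by rewrite qmulq0 add0r.
  + move: (qmulV dc); generalize (qinv (d - c)) => j hj.
    apply: (eq_mod (D := qone - qmul (d - c) j)); first by qring.
    by rewrite hj subrr.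
-
  have bc := subr_neq0 h23; have dc := subr_neq0 (nesym h34).
  exists (qmatmul (mR (b - c)) (qmatmul mI (mT (- c)))); split; first by gl.
  rewrite !mobius_mul; try (by gl); try exact: mT_GL.
  rewrite !mT_S mT_N mI_N !mI_S (negbTE bc) (negbTE dc) subrr eqxx !mR_S // mR_N /crossratio.
  by rewrite qmul0q qmulVl.
Qed.

Definition F1 t al : qmat := qmatmul (mT t) (mR al).
Definition F2 c be al : qmat := qmatmul (mT c) (qmatmul mI (qmatmul (mT be) (mR al))).

Definition iota (c : quat) (w : hpoint) := match w with Some q => qinv (q - c) | None => 0 end.

Lemma iota_S c w : w <> Some c -> mobius (mT c) (mobius mI (Some (iota c w))) = w.
Proof.
case: w => [q|] h; rewrite /iota; last by rewrite mI_S eqxx mT_N.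
have hq := subr_neq0 h; rewrite mI_S (negbTE (qinv_neq0 hq)) mT_S qinvK.
by rewrite subrK.
Qed.

Lemma target (w1 w2 w3 : hpoint) : w1 <> w2 -> w1 <> w3 -> w2 <> w3 ->
  exists F, inGL2 F /\ mobius F (Some 0) = w1 /\ mobius F (Some qone) = w2 /\ mobius F None = w3 /\
    ((exists t al, al != 0 /\ F = F1 t al) \/ (exists c be al, al != 0 /\ F = F2 c be al)).
Proof.
move=> h12 h13 h23; case: w3 h13 h23 => [c|] h13 h23.
  set be := iota c w1; set al := iota c w2 - be.
  have hal : al != 0.
    rewrite /al /be subr_eq0; apply/eqP => e; apply: h12.
    clear al be; move: e h13 h23; case: w1 => [a|]; case: w2 => [b|] //= e h13 h23.
    - by move/qinv_inj: e => /(congr1 (fun x => x + c)); rewrite !subrK => ->.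
    - by exfalso; move: (qinv_neq0 (subr_neq0 h13)); rewrite -e eqxx.
    - by exfalso; move: (qinv_neq0 (subr_neq0 h23)); rewrite e eqxx.
  have G : inGL2 (F2 c be al) by rewrite /F2; gl.
  exists (F2 c be al); split => //.
  rewrite /F2 !mobius_mul; try (by gl); try exact: mT_GL.
  rewrite !mR_S // mR_N mT_N mI_N qmul0q qmul1q.
  split; first by rewrite mT_S add0r; exact: iota_S.
  split; first by rewrite mT_S /al subrK; apply: iota_S.
  by rewrite mT_S add0r; split => //; right; exists c, be, al.
case: w1 w2 h12 h13 h23 => [a|] // [b|] // h12 _ _.
have hb := subr_neq0 (nesym h12).
exists (F1 a (b - a)); split; first by rewrite /F1; gl.
rewrite /F1 !mobius_mul; try exact: mR_GL.
rewrite !mR_S // mR_N mT_N !mT_S qmul0q qmul1q add0r subrK.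
by split => //; split => //; split => //; left; exists a, (b - a).
Qed.

End D.


Section E.
Variable R : realType.
Local Notation quat := (quat R).
Local Notation hpoint := (hpoint R).
Local Notation qmat := (qmat R).
Local Notation qmul := (@qmul R).
Local Notation qinv := (@qinv R).
Local Notation qone := (@qone R).
Local Notation qmatmul := (@qmatmul R).
Local Notation qmat1 := (@qmat1 R).
Local Notation mobius := (@mobius R).
Local Notation inGL2 := (@inGL2 R).
Local Notation mI := (@mI R).

Lemma GL_inv g : inGL2 g -> exists h, inGL2 h /\ (forall z, mobius h (mobius g z) = z) /\
   (forall z, mobius g (mobius h z) = z).
Proof.
move=> G; have [h [e1 e2]] := G; exists h.
have H : inGL2 h by exists g.
split => //; split => z; rewrite -mobius_mul // ?e1 ?e2 mobius1 //.
Qed.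

Lemma mD_N a : mobius (mD a) None = None.
Proof. by rewrite /mobius /= eqxx. Qed.

Lemma Schar (q1 q2 q3 q4 q1' q2' q3' : hpoint) B F :
  inGL2 B -> mobius B q1 = Some 0 -> mobius B q2 = Some qone -> mobius B q3 = None ->
  inGL2 F -> mobius F (Some 0) = q1' -> mobius F (Some qone) = q2' -> mobius F None = q3' ->
  forall p, mobius B q4 = Some p ->
  forall y, (exists g : qmat, inGL2 g /\ mobius g q1 = q1' /\ mobius g q2 = q2' /\
                       mobius g q3 = q3' /\ mobius g q4 = y) <->
     (exists2 a, a != 0 & y = mobius F (Some (qmul (qmul a p) (qinv a)))).
Proof.
move=> GB B1 B2 B3 GF F1 F2 F3 p B4 y; split.
  case=> g [Gg [g1 [g2 [g3 g4]]]].
  have [Bi [GBi [Bi1 Bi2]]] := GL_inv GB.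
  have [Fi [GFi [Fi1 Fi2]]] := GL_inv GF.
  set k := qmatmul Fi (qmatmul g Bi).
  have Gk : inGL2 k by rewrite /k; apply: GL_mul => //; apply: GL_mul.
  have kE z : mobius k z = mobius Fi (mobius g (mobius Bi z)).
    by rewrite /k !mobius_mul //; apply: GL_mul.
  have [a ha ka] : exists2 a, a != 0 & forall q, mobius k (Some q) = Some (qmul (qmul a q) (qinv a)).
    apply: stab => //; rewrite kE.
    - by rewrite -B1 Bi1 g1 -F1 Fi1.
    - by rewrite -B2 Bi1 g2 -F2 Fi1.
    - by rewrite -B3 Bi1 g3 -F3 Fi1.
  exists a => //; rewrite -ka kE -B4 Bi1 Fi2 //.
case=> a ha ->.
exists (qmatmul F (qmatmul (mD a) B)).
have G : inGL2 (qmatmul (mD a) B) by apply: GL_mul => //; apply: mD_GL.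
split; first by apply: GL_mul.
rewrite !mobius_mul // B1 B2 B3 B4 !mD_S // mD_N qmulq0 qmul0q qmulq1 qmulV //.
Qed.

End E.



Section G1.
Variable R : realType.
Local Notation quat := (quat R).
Local Notation hpoint := (hpoint R).
Local Notation qmul := (@qmul R).
Local Notation qinv := (@qinv R).
Local Notation qconj := (@qconj R).
Local Notation qone := (@qone R).
Local Notation qmk := (@qmk R).
Local Notation N := (@qnorm2 R).
Local Notation dot := (@dot R).

Lemma dotC x y : dot x y = dot y x. Proof. qE; ring. Qed.
Lemma dotDl x y z : dot (x + y) z = dot x z + dot y z. Proof. qE; ring. Qed.
Lemma dotDr x y z : dot z (x + y) = dot z x + dot z y. Proof. qE; ring. Qed.
Lemma dotBl x y z : dot (x - y) z = dot x z - dot y z. Proof. qE; ring. Qed.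
Lemma dotBr x y z : dot z (x - y) = dot z x - dot z y. Proof. qE; ring. Qed.
Lemma dotZl a x z : dot (a *: x) z = a * dot x z. Proof. qE; ring. Qed.
Lemma dotZr a x z : dot z (a *: x) = a * dot z x. Proof. qE; ring. Qed.
Lemma dot0l x : dot 0 x = 0. Proof. qE; ring. Qed.
Lemma dot0r x : dot x 0 = 0. Proof. qE; ring. Qed.
Lemma dotxx x : dot x x = N x. Proof. qE; ring. Qed.
Lemma normD x y : N (x + y) = N x + 2 * dot x y + N y. Proof. qE; ring. Qed.
Lemma normB x y : N (x - y) = N x - 2 * dot x y + N y. Proof. qE; ring. Qed.
Lemma normZ a x : N (a *: x) = a ^+ 2 * N x. Proof. qE; ring. Qed.
Lemma normN x : N (- x) = N x. Proof. qE; ring. Qed.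
Lemma norm0 : N 0 = 0. Proof. qE; ring. Qed.
Lemma dotMr x y k : dot (qmul x k) (qmul y k) = N k * dot x y. Proof. qE; ring. Qed.
Lemma dotMl x y k : dot (qmul k x) (qmul k y) = N k * dot x y. Proof. qE; ring. Qed.
Lemma dot_conj x y : dot (qconj x) (qconj y) = dot x y. Proof. qE; ring. Qed.
Lemma dot_conjl x y : dot (qconj x) y = dot x (qconj y). Proof. qE; ring. Qed.
Lemma dot1 x : dot x qone = qc x 0. Proof. qE; ring. Qed.

Lemma qnorm_inv x : N (qinv x) = (N x)^-1.
Proof.
have [->|h] := eqVneq x 0; first by rewrite qinv0 norm0 invr0.
by rewrite /qinv normZ qnorm_conj expr2 -mulrA mulVf ?mulr1 // qnorm_neq0.
Qed.

Lemma dot_inv z v : dot (qinv z) v = (N z)^-1 * dot z (qconj v).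
Proof. by rewrite /qinv dotZl dot_conjl. Qed.

Lemma qnorm_gt0 x : x != 0 -> 0 < N x.
Proof. by move=> h; rewrite lt0r qnorm_neq0 // qnorm_ge0. Qed.

End G1.



Section G2.
Variable R : realType.
Local Notation quat := (quat R).
Local Notation hpoint := (hpoint R).
Local Notation qmul := (@qmul R).
Local Notation qinv := (@qinv R).
Local Notation qconj := (@qconj R).
Local Notation qone := (@qone R).
Local Notation qmk := (@qmk R).
Local Notation N := (@qnorm2 R).
Local Notation dot := (@dot R).
Local Notation mobius := (@mobius R).

Definition Sph (m : quat) (h : R) (c : quat) (rho : R) : hpoint -> Prop :=
  fun y => exists z, y = Some z /\ dot z m = h /\ N (z - c) = rho.
Definition Pln (a : quat) (al : R) (b : quat) (be : R) : hpoint -> Prop :=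
  fun y => y = None \/ exists z, y = Some z /\ dot z a = al /\ dot z b = be.
Definition img (f : hpoint -> hpoint) (X : hpoint -> Prop) : hpoint -> Prop :=
  fun y => exists x, X x /\ y = f x.
Definition seteq (X Y : hpoint -> Prop) := forall y, X y <-> Y y.
Definition two (X : hpoint -> Prop) := exists x y, X x /\ X y /\ x <> y.
Definition SphF X := exists m h c rho, m != 0 /\ seteq X (Sph m h c rho).
Definition PlnF X := exists a al b be, a != 0 /\ b != 0 /\ dot a b = 0 /\ seteq X (Pln a al b be).

Lemma seteq_image f X Y : seteq X Y -> seteq (img f X) (img f Y).
Proof. by move=> e y; split => -[x [hx ->]]; exists x; split => //; apply/e. Qed.

Lemma seteq_trans X Y Z : seteq X Y -> seteq Y Z -> seteq X Z.
Proof. by move=> e1 e2 y; rewrite e1 e2. Qed.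

Lemma seteq_sym X Y : seteq X Y -> seteq Y X.
Proof. by move=> e y; rewrite e. Qed.

Lemma two_image f X : injective f -> two X -> two (img f X).
Proof.
move=> fi [x [y [hx [hy hxy]]]]; exists (f x), (f y); split; first by exists x.
by split; [exists y | move=> /fi].
Qed.

Lemma two_seteq X Y : seteq X Y -> two X -> two Y.
Proof. by move=> e [x [y [hx [hy hxy]]]]; exists x, y; rewrite -!e. Qed.

Lemma SphF_ext X Y : seteq X Y -> SphF X -> SphF Y.
Proof.
move=> e [m [h [c [rho [hm e']]]]]; exists m, h, c, rho; split => //.
exact: seteq_trans (seteq_sym e) e'.
Qed.

Lemma PlnF_ext X Y : seteq X Y -> PlnF X -> PlnF Y.
Proof.
move=> e [a [al [b [be [ha [hb [hab e']]]]]]]; exists a, al, b, be; do 3 split => //.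
exact: seteq_trans (seteq_sym e) e'.
Qed.

Lemma image_comp f g X : seteq (img (fun x => f (g x)) X) (img f (img g X)).
Proof.
move=> y; split; first by case=> x [hx ->]; exists (g x); split => //; exists x.
by case=> _ [[x [hx ->]] ->]; exists x.
Qed.

Lemma image_ext f g X : (forall x, f x = g x) -> seteq (img f X) (img g X).
Proof. by move=> e y; split => -[x [hx ->]]; exists x; rewrite e. Qed.

Lemma Sph_T t m h c rho :
  seteq (img (mobius (mT t)) (Sph m h c rho)) (Sph m (h + dot t m) (c + t) rho).
Proof.
move=> y; split.
  case=> _ [[z [-> [hz hn]]] ->]; rewrite mT_S; exists (z + t); split => //.
  split; [by rewrite dotDl hz | ].
  by rewrite -hn; congr N; qring.
case=> z [-> [hz hn]]; exists (Some (z - t)); split; last by rewrite mT_S subrK.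
exists (z - t); split => //; split.
  by rewrite dotBl hz addrK.
by rewrite -hn; congr N; qring.
Qed.

Lemma SphF_T t X : SphF X -> SphF (img (mobius (mT t)) X).
Proof.
move=> [m [h [c [rho [hm e]]]]]; exists m, (h + dot t m), (c + t), rho; split => //.
exact: seteq_trans (seteq_image _ e) (Sph_T _ _ _ _ _).
Qed.

Lemma Pln_T t a al b be :
  seteq (img (mobius (mT t)) (Pln a al b be)) (Pln a (al + dot t a) b (be + dot t b)).
Proof.
move=> y; split.
  case=> _ [[->|[z [-> [hz1 hz2]]]] ->]; first by left; rewrite mT_N.
  by right; rewrite mT_S; exists (z + t); rewrite !dotDl hz1 hz2.
case=> [->|[z [-> [hz1 hz2]]]]; first by exists None; split; [left | rewrite mT_N].
exists (Some (z - t)); split; last by rewrite mT_S subrK.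
by right; exists (z - t); rewrite !dotBl hz1 hz2 !addrK.
Qed.

Lemma PlnF_T t X : PlnF X -> PlnF (img (mobius (mT t)) X).
Proof.
move=> [a [al [b [be [ha [hb [hab e]]]]]]].
exists a, (al + dot t a), b, (be + dot t b); do 3 split => //.
exact: seteq_trans (seteq_image _ e) (Pln_T _ _ _ _ _).
Qed.

Lemma Sph_R k m h c rho : k != 0 ->
  seteq (img (mobius (mR k)) (Sph m h c rho)) (Sph (qmul m k) (h * N k) (qmul c k) (rho * N k)).
Proof.
move=> hk y; have Nk := qnorm_neq0 hk; split.
  case=> _ [[z [-> [hz hn]]] ->]; rewrite mR_S //; exists (qmul z k); split => //.
  by rewrite dotMr hz mulrC -qmulBl qnormM hn.
case=> z [-> [hz hn]]; exists (Some (qmul z (qinv k))); split; last by rewrite mR_S // qmulKr'.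
exists (qmul z (qinv k)); split => //; split.
  apply: (mulfI Nk); rewrite -dotMr qmulKr' // hz mulrC //.
apply: (mulIf Nk); rewrite -qnormM qmulBl qmulKr' // hn //.
Qed.

Lemma SphF_R k X : k != 0 -> SphF X -> SphF (img (mobius (mR k)) X).
Proof.
move=> hk [m [h [c [rho [hm e]]]]]; exists (qmul m k), (h * N k), (qmul c k), (rho * N k).
split; first exact: qmul_neq0.
exact: seteq_trans (seteq_image _ e) (Sph_R _ _ _ _ hk).
Qed.

End G2.



Section G3.
Variable R : realType.
Local Notation quat := (quat R).
Local Notation hpoint := (hpoint R).
Local Notation qmul := (@qmul R).
Local Notation qinv := (@qinv R).
Local Notation qconj := (@qconj R).
Local Notation qone := (@qone R).
Local Notation qmk := (@qmk R).
Local Notation N := (@qnorm2 R).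
Local Notation dot := (@dot R).
Local Notation mobius := (@mobius R).
Local Notation mI := (@mI R).
Local Notation two := (@two R).
Local Notation img := (@img R).
Local Notation seteq := (@seteq R).
Local Notation SphF := (@SphF R).
Local Notation PlnF := (@PlnF R).
Local Notation Sph := (@Sph R).
Local Notation Pln := (@Pln R).

Lemma qconjK x : qconj (qconj x) = x. Proof. qring. Qed.
Lemma qconjD x y : qconj (x + y) = qconj x + qconj y. Proof. qring. Qed.
Lemma qconjZ a x : qconj (a *: x) = a *: qconj x. Proof. qring. Qed.
Lemma qconj_eq0 x : (qconj x == 0) = (x == 0).
Proof. by rewrite -!qnorm_eq0 qnorm_conj. Qed.

Lemma dot_invc z v : dot (qinv z) (qconj v) = (N z)^-1 * dot z v.
Proof. by rewrite dot_inv qconjK. Qed.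

Lemma Sph_mem m h c rho z : Sph m h c rho (Some z) <-> dot z m = h /\ N z - 2 * dot z c + (N c - rho) = 0.
Proof.
split.
  by case=> _ [[<-] [-> <-]]; split => //; rewrite normB; ring.
case=> h1 h2; exists z; split => //; split => //.
by rewrite normB; apply/eqP; rewrite -subr_eq0; apply/eqP; rewrite -h2; ring.
Qed.

Lemma two_ex X : two X -> exists x, X x.
Proof. by case=> x [y [hx _]]; exists x. Qed.

Lemma Sph_Some m h c rho y : Sph m h c rho y -> exists z, y = Some z.
Proof. by case=> z [-> _]; exists z. Qed.

Lemma mI_Some z : z != 0 -> mobius mI (Some z) = Some (qinv z).
Proof. by move=> h; rewrite mI_S (negbTE h). Qed.
Lemma mI_0 : mobius mI (Some 0) = None.
Proof. by rewrite mI_S eqxx. Qed.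

Lemma two_Sph_neq (m : quat) h c rho : two (Sph m h c rho) ->
  (forall z, Sph m h c rho (Some z) -> z = 0) -> False.
Proof.
case=> x [y [hx [hy hxy]]] H.
case: (Sph_Some hx) => zx ex; case: (Sph_Some hy) => zy ey; subst.
by apply: hxy; rewrite (H _ hx) (H _ hy).
Qed.

Lemma Sph_I_pln m c rho : m != 0 -> two (Sph m 0 c rho) -> N c = rho ->
  PlnF (img (mobius mI) (Sph m 0 c rho)).
Proof.
move=> hm two1 hK.
have hNm := qnorm_neq0 hm.
set b := N m *: qconj c - dot m c *: qconj m.
have db w : dot w b = N m * dot w (qconj c) - dot m c * dot w (qconj m).
  by rewrite /b dotBr !dotZr.
exists (qconj m), 0, b, (N m / 2); split; first by rewrite qconj_eq0.
split.
  apply/eqP => b0; apply: (two_Sph_neq two1) => z /Sph_mem [hz1 hz2].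
  have : dot (qconj z) b = 0 by rewrite b0 dot0r.
  rewrite db !dot_conj hz1 mulr0 subr0 => /eqP; rewrite mulf_eq0 (negbTE hNm) /= => /eqP hz.
  by apply/eqP; rewrite -qnorm_eq0; apply/eqP; move: hz2; rewrite hz hK subrr; move=> e; rewrite -e; ring.
split; first by rewrite db dotxx qnorm_conj !dot_conj; ring.
move=> y; split.
  case=> x [hx ->]; have [z ez] := Sph_Some hx; subst x; move/Sph_mem: hx => [hz1 hz2].
  have [->|hz] := eqVneq z 0; first by rewrite mI_0; left.
  right; rewrite mI_Some //; exists (qinv z); split => //.
  have hNz := qnorm_neq0 hz.
  rewrite db !dot_invc hz1 !mulr0 subr0; split => //.
  have -> : dot z c = N z / 2 by move: hz2; rewrite hK subrr addr0 => e; lra.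
  by field.
case=> [->|[w [-> [hw1 hw2]]]].
  exists (Some 0); rewrite mI_0; split => //; apply/Sph_mem; rewrite dot0l norm0 hK; split => //.
  by rewrite dot0l; ring.
have hwc : dot w (qconj c) = 1 / 2.
  by move: hw2; rewrite db hw1 mulr0 subr0 => e; apply: (mulfI hNm); rewrite e; field.
have hw : w != 0 by apply/eqP => w0; move: hwc; rewrite w0 dot0l => /eqP; rewrite eq_sym mulf_eq0 oner_eq0 invr_eq0 pnatr_eq0.
have hNw := qnorm_neq0 hw.
exists (Some (qinv w)); rewrite mI_Some ?qinvK ?qinv_neq0 //; split => //.
apply/Sph_mem; rewrite !dot_inv hw1 hwc qnorm_inv hK.
by split; [ring | field].
Qed.
Lemma fwS (n e f h K rho Nc : R) : n != 0 -> K != 0 -> Nc = K + rho -> f = h -> n - 2 * e + K = 0 ->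
  K * (n^-1 * f) - 2 * h * (n^-1 * e) = - h /\ n^-1 - 2 * (K^-1 * (n^-1 * e)) + K^-1 ^+ 2 * Nc = rho / K ^+ 2.
Proof.
move=> hn hK -> -> he; have -> : e = (n + K) / 2 by lra.
by split; field; rewrite ?hn ?hK.
Qed.
Lemma bwS (n e f h K rho Nc : R) : K != 0 -> Nc = K + rho -> (n = 0 -> e = 0) ->
  K * f - 2 * h * e = - h -> n - 2 * (K^-1 * e) + K^-1 ^+ 2 * Nc = rho / K ^+ 2 ->
  n != 0 /\ n^-1 * f = h /\ n^-1 - 2 * (n^-1 * e) + K = 0.
Proof.
move=> hK -> hne h1 h2.
have E : K * n - 2 * e + 1 = 0.
  have -> : K * n - 2 * e + 1 = K * (n - 2 * (K^-1 * e) + K^-1 ^+ 2 * (K + rho) - rho / K ^+ 2) by field.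
  by rewrite h2 subrr mulr0.
have hn : n != 0 by apply/eqP => n0; move: E; rewrite n0 (hne n0); lra.
have hf : f = h * n.
  apply: (mulfI hK).
  move: h1; have -> : e = (K * n + 1) / 2 by lra. move=> h1. nra.
split => //; split.
  by rewrite hf; field.
have -> : e = (K * n + 1) / 2 by lra.
by field.
Qed.
Lemma fwC (n e f h Nm : R) : n != 0 -> h != 0 -> f = h -> n - 2 * e = 0 ->
  n^-1 * e = 1 / 2 /\ n^-1 - 2 * ((2 * h)^-1 * (n^-1 * f)) + (2 * h)^-1 ^+ 2 * Nm = (2 * h)^-1 ^+ 2 * Nm.
Proof.
move=> hn hh -> he; have -> : e = n / 2 by lra.
by split; field; rewrite ?hn ?hh.
Qed.
Lemma bwC (n e f h Nm : R) : h != 0 -> (n = 0 -> e = 0) -> e = 1 / 2 ->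
  n - 2 * ((2 * h)^-1 * f) + (2 * h)^-1 ^+ 2 * Nm = (2 * h)^-1 ^+ 2 * Nm ->
  n != 0 /\ n^-1 * f = h /\ n^-1 - 2 * (n^-1 * e) = 0.
Proof.
move=> hh hne he h2.
have hn : n != 0 by apply/eqP => n0; move: he; rewrite (hne n0); lra.
have hf : f = h * n.
  have E : n - 2 * ((2 * h)^-1 * f) = 0 by lra.
  have -> : f = h * n - h * (n - 2 * ((2 * h)^-1 * f)) by field.
  by rewrite E mulr0 subr0.
split => //; split; first by rewrite hf; field.
by rewrite he; field.
Qed.

Lemma Sph_I_K m h c rho : m != 0 -> two (Sph m h c rho) -> N c - rho != 0 ->
  SphF (img (mobius mI) (Sph m h c rho)).
Proof.
move=> hm two1 hK.
set K := N c - rho in hK.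
have hNc : N c = K + rho by rewrite /K subrK.
set m' := K *: qconj m - (2 * h) *: qconj c.
set c' := K^-1 *: qconj c.
have dm w : dot w m' = K * dot w (qconj m) - 2 * h * dot w (qconj c) by rewrite /m' dotBr !dotZr.
have nc w : N (w - c') = N w - 2 * (K^-1 * dot w (qconj c)) + K^-1 ^+ 2 * N c.
  by rewrite normB /c' dotZr normZ qnorm_conj.
have fw z : Sph m h c rho (Some z) -> z != 0 /\ dot (qinv z) m' = - h /\ N (qinv z - c') = rho / K ^+ 2.
  move/Sph_mem => [hz1 hz2].
  have hz : z != 0 by apply/eqP => z0; move: hz2; rewrite z0 norm0 dot0l mulr0 subrr add0r => e; move: hK; rewrite /K e eqxx.
  have hn := qnorm_neq0 hz.
  have [f1 f2] := fwS hn hK hNc hz1 hz2.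
  by rewrite dm nc !dot_invc qnorm_inv.
have hm' : m' != 0.
  apply/eqP => m0; have [x hx] := two_ex two1; have [z ez] := Sph_Some hx; subst x.
  have [_ [h1 _]] := fw _ hx; move: h1; rewrite m0 dot0r => /eqP; rewrite eq_sym oppr_eq0 => /eqP h0.
  move: m0; rewrite /m' h0 mulr0 scale0r subr0 => /eqP; rewrite scaler_eq0 (negbTE hK) qconj_eq0 (negbTE hm).
  by [].
exists m', (- h), c', (rho / K ^+ 2); split => // y; split.
  case=> x [hx ->]; have [z ez] := Sph_Some hx; subst x.
  have [hz [h1 h2]] := fw _ hx.
  by rewrite mI_Some //; exists (qinv z).
case=> w [-> [hw1 hw2]].
move: hw1 hw2; rewrite dm nc => hw1 hw2.
have hne : N w = 0 -> dot w (qconj c) = 0.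
  by move/eqP; rewrite qnorm_eq0 => /eqP ->; rewrite dot0l.
have [hn [g1 g2]] := bwS hK hNc hne hw1 hw2.
have hw : w != 0 by rewrite -qnorm_eq0.
exists (Some (qinv w)); rewrite mI_Some ?qinvK ?qinv_neq0 //; split => //.
by apply/Sph_mem; rewrite !dot_inv qnorm_inv g1.
Qed.

Lemma Sph_I_C m h c rho : m != 0 -> two (Sph m h c rho) -> N c - rho = 0 -> h != 0 ->
  SphF (img (mobius mI) (Sph m h c rho)).
Proof.
move=> hm two1 hK hh.
set c' := (2 * h)^-1 *: qconj m.
have nc w : N (w - c') = N w - 2 * ((2 * h)^-1 * dot w (qconj m)) + (2 * h)^-1 ^+ 2 * N m.
  by rewrite normB /c' dotZr normZ qnorm_conj.
have fw z : Sph m h c rho (Some z) -> z != 0 /\ dot (qinv z) (qconj c) = 1 / 2 /\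
      N (qinv z - c') = (2 * h)^-1 ^+ 2 * N m.
  move/Sph_mem => [hz1 hz2]; rewrite hK addr0 in hz2.
  have hz : z != 0 by apply/eqP => z0; move: hz1; rewrite z0 dot0l => e; move: hh; rewrite -e eqxx.
  have hn := qnorm_neq0 hz.
  have [f1 f2] := fwC (N m) hn hh hz1 hz2.
  by rewrite nc !dot_invc qnorm_inv.
have hc : qconj c != 0.
  rewrite qconj_eq0; apply/eqP => c0; apply: (two_Sph_neq two1) => z /Sph_mem [_].
  rewrite hK addr0 c0 dot0r mulr0 subr0 => /eqP; rewrite qnorm_eq0 => /eqP.
  by [].
exists (qconj c), (1 / 2), c', ((2 * h)^-1 ^+ 2 * N m); split => // y; split.
  case=> x [hx ->]; have [z ez] := Sph_Some hx; subst x.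
  have [hz [h1 h2]] := fw _ hx.
  by rewrite mI_Some //; exists (qinv z).
case=> w [-> [hw1 hw2]].
move: hw2; rewrite nc => hw2.
have hne : N w = 0 -> dot w (qconj c) = 0.
  by move/eqP; rewrite qnorm_eq0 => /eqP ->; rewrite dot0l.
have [hn [g1 g2]] := bwC hh hne hw1 hw2.
have hw : w != 0 by rewrite -qnorm_eq0.
exists (Some (qinv w)); rewrite mI_Some ?qinvK ?qinv_neq0 //; split => //.
by apply/Sph_mem; rewrite !dot_inv qnorm_inv g1 hK addr0.
Qed.

Lemma Sph_I m h c rho : m != 0 -> two (Sph m h c rho) ->
  SphF (img (mobius mI) (Sph m h c rho)) \/ PlnF (img (mobius mI) (Sph m h c rho)).
Proof.
move=> hm two1.
have [hK|hK] := eqVneq (N c - rho) 0; last by left; apply: Sph_I_K.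
have [h0|hh] := eqVneq h 0; last by left; apply: Sph_I_C.
right; subst h; apply: Sph_I_pln => //.
by apply/eqP; rewrite -subr_eq0 hK.
Qed.

End G3.



Section G4.
Variable R : realType.
Local Notation quat := (quat R).
Local Notation hpoint := (hpoint R).
Local Notation qmul := (@qmul R).
Local Notation qinv := (@qinv R).
Local Notation qconj := (@qconj R).
Local Notation qone := (@qone R).
Local Notation qmk := (@qmk R).
Local Notation qc := (@qc R).
Local Notation N := (@qnorm2 R).
Local Notation dot := (@dot R).

Definition perp (v : quat) : quat :=
  if (qc v 1 == 0) && (qc v 2 == 0) then qmk 0 1 0 0 else qmk 0 (- qc v 2) (qc v 1) 0.

Section Perp.
Variables v1 v2 v3 : R.
Let vv := qmk 0 v1 v2 v3.
Hypothesis hv : vv != 0.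

Lemma perp_cases : (v1 = 0 /\ v2 = 0 /\ perp vv = qmk 0 1 0 0) \/ (perp vv = qmk 0 (- v2) v1 0 /\ (v1 != 0 \/ v2 != 0)).
Proof.
rewrite /perp /vv qmk1 qmk2; case: ifP => [/andP [/eqP -> /eqP ->]|h]; first by left.
right; split => //; move/negbT: h; rewrite negb_and => /orP [] ->; auto.
Qed.

Lemma perp_neq0 : perp vv != 0.
Proof.
have [[_ [_ ->]]|[-> h]] := perp_cases.
  by apply/eqP => /(congr1 (fun x => qc x 1)); rewrite qmk1 qc0 => /eqP; rewrite oner_eq0.
apply/eqP => /(congr1 (fun x => (qc x 1, qc x 2))); rewrite !qmk1 !qmk2 !qc0 => -[] /eqP; rewrite oppr_eq0 => h2 h1.
by move: h; rewrite h1 (eqP h2) eqxx; case.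
Qed.

Lemma perp_re : qc (perp vv) 0 = 0.
Proof. by have [[_ [_ ->]]|[-> _]] := perp_cases; rewrite qmk0. Qed.

Lemma perp_dot : dot (perp vv) vv = 0.
Proof. by have [[e1 [e2 ->]]|[-> _]] := perp_cases; rewrite /vv; qE; rewrite ?e1 ?e2; ring. Qed.

Lemma perp_re2 : qc (qmul vv (perp vv)) 0 = 0.
Proof. by have [[e1 [e2 ->]]|[-> _]] := perp_cases; rewrite /vv; qE; rewrite ?e1 ?e2; ring. Qed.

Lemma perp_dot2 : dot (qmul vv (perp vv)) vv = 0.
Proof. by have [[e1 [e2 ->]]|[-> _]] := perp_cases; rewrite /vv; qE; rewrite ?e1 ?e2; ring. Qed.

Lemma perp_anti : qmul (perp vv) vv = - qmul vv (perp vv).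
Proof. by have [[e1 [e2 ->]]|[-> _]] := perp_cases; rewrite /vv; apply qeq; qE; rewrite ?e1 ?e2; ring. Qed.

Lemma perp_expand q : let w := perp vv in
  (N vv * N w) *: q = (N vv * N w * qc q 0) *: qone + (N w * dot q vv) *: vv +
     (N vv * dot q w) *: w + dot q (qmul vv w) *: qmul vv w.
Proof. by have [[e1 [e2 ->]]|[-> _]] := perp_cases; rewrite /vv; apply qeq; qE; rewrite ?e1 ?e2; ring. Qed.

End Perp.
End G4.



Section G5.
Variable R : realType.
Local Notation quat := (quat R).
Local Notation hpoint := (hpoint R).
Local Notation qmul := (@qmul R).
Local Notation qinv := (@qinv R).
Local Notation qconj := (@qconj R).
Local Notation qone := (@qone R).
Local Notation qmk := (@qmk R).
Local Notation qc := (@qc R).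
Local Notation N := (@qnorm2 R).
Local Notation dot := (@dot R).
Local Notation Sph := (@Sph R).
Local Notation Pln := (@Pln R).
Local Notation two := (@two R).

Definition uc n (u : 'rV[R]_n.+1) (k : nat) : R := u ord0 (inord k).
Lemma uc_ord n (u : 'rV[R]_n.+1) (i : 'I_n.+1) : u ord0 i = uc u i.
Proof. by rewrite /uc inord_val. Qed.

Definition vq3 (u : 'rV[R]_3) : quat := qmk 0 (uc u 0) (uc u 1) (uc u 2).

Definition M3 (m : quat) : 'M[R]_(3, 4) :=
  \matrix_(i < 3, j < 4) (qmul m (qmk 0 (i == 0 :> nat)%:R (i == 1 :> nat)%:R (i == 2 :> nat)%:R)) ord0 j.

Lemma row4P (x y : quat) : (forall j : 'I_4, x ord0 j = y ord0 j) -> x = y.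
Proof. by move=> h; apply/rowP. Qed.

Lemma M3E m u : u *m M3 m = qmul m (vq3 u).
Proof.
apply: row4P => j; rewrite !mxE !big_ord_recl big_ord0 !mxE /= !uc_ord /vq3.
case: j => [[|[|[|[|k]]]] hj] //=; qE; rewrite /=; ring.
Qed.

Lemma M3_rank m : m != 0 -> \rank (M3 m) = 3%N.
Proof.
move=> hm; apply/eqP; apply: inj_row_free => v; rewrite M3E => /qmul_eq0 [/eqP|].
  by rewrite (negbTE hm).
move=> e; have e1 := congr1 (fun x => qc x 1) e; have e2 := congr1 (fun x => qc x 2) e;
  have e3 := congr1 (fun x => qc x 3) e; move: e1 e2 e3; rewrite /vq3 !qmk1 !qmk2 !qmk3 !qc0 /= => e1 e2 e3.
apply/rowP => i; rewrite mxE uc_ord.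
by case: i => [[|[|[|k]]] hi] //=.
Qed.

Lemma vq3_row q : qc q 0 = 0 -> vq3 (\row_(i < 3) qc q i.+1) = q.
Proof.
move=> q0; apply qeq; rewrite /vq3 ?qmk0 ?q0 // ?qmk1 ?qmk2 ?qmk3 /uc mxE inordK //.
Qed.

Lemma Sph_conv m h c rho : m != 0 -> two (Sph m h c rho) -> is_2sphere (Sph m h c rho).
Proof.
move=> hm two1; have hNm := qnorm_neq0 hm.
set la := (h - dot c m) / N m.
set c0 := c + la *: m.
set r0 := rho - la ^+ 2 * N m.
have hc0 : dot c0 m = h by rewrite /c0 dotDl dotZl dotxx /la; field.
have key z : dot z m = h -> N (z - c) = N (z - c0) + la ^+ 2 * N m.
  move=> hz; have -> : z - c = (z - c0) + la *: m by rewrite /c0; qring.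
  by rewrite normD dotZr dotBl hz hc0 subrr !mulr0 addr0 normZ.
have memr z : Sph m h c rho (Some z) -> N (z - c0) = r0.
  by case=> _ [[<-] [hz1 hz2]]; rewrite /r0 -hz2 key // addrK.
have pos : 0 < r0.
  case: two1 => x [y [hx [hy hxy]]].
  have [zx ex] := Sph_Some hx; have [zy ey] := Sph_Some hy; subst x y.
  rewrite lt0r -(memr _ hx) qnorm_ge0 andbT qnorm_eq0 subr_eq0; apply/eqP => e1.
  apply: hxy; move: (memr _ hy); rewrite -(memr _ hx) e1 subrr norm0 => /eqP.
  by rewrite qnorm_eq0 subr_eq0 => /eqP ->.
exists c0, (Num.sqrt r0), (M3 m); split; first by rewrite sqrtr_gt0.
split; first exact: M3_rank.
move=> y; split.
  case=> z [-> [hz1 hz2]].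
  set x := z - c0.
  have hx : dot x m = 0 by rewrite dotBl hz1 hc0 subrr.
  set q := qmul (qinv m) x.
  have q0 : qc q 0 = 0.
    rewrite /q /qinv qmulZl qcZ; have -> : qc (qmul (qconj m) x) 0 = dot m x by qE; ring.
    by rewrite dotC hx mulr0.
  exists (\row_(i < 3) qc q i.+1).
  have Eu : vq3 (\row_(i < 3) qc q i.+1) = q.
    exact: vq3_row.
  rewrite M3E Eu /q qmulKl' //; split; first by rewrite /x addrC subrK.
  rewrite sqr_sqrtr; last exact: ltW.
  by rewrite /x /r0 -hz2 key // addrK.
case=> u [-> hu]; rewrite sqr_sqrtr in hu; last exact: ltW.
exists (c0 + u *m M3 m); split => //.
set x := u *m M3 m.
have hx : dot x m = 0 by rewrite /x M3E /vq3; qE; ring.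
split; first by rewrite dotDl hc0 hx addr0.
rewrite key; last by rewrite dotDl hc0 hx addr0.
have -> : c0 + x - c0 = x by qring.
by rewrite hu /r0 subrK.
Qed.

End G5.



Section G6.
Variable R : realType.
Local Notation quat := (quat R).
Local Notation hpoint := (hpoint R).
Local Notation qmul := (@qmul R).
Local Notation qinv := (@qinv R).
Local Notation qconj := (@qconj R).
Local Notation qone := (@qone R).
Local Notation qmk := (@qmk R).
Local Notation qc := (@qc R).
Local Notation N := (@qnorm2 R).
Local Notation dot := (@dot R).
Local Notation Sph := (@Sph R).
Local Notation Pln := (@Pln R).
Local Notation two := (@two R).

Definition M2 (a w vw : quat) : 'M[R]_(2, 4) :=
  \matrix_(i < 2, j < 4) (qmul a ((i == 0 :> nat)%:R *: w + (i == 1 :> nat)%:R *: vw)) ord0 j.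

Lemma M2E a w vw u : u *m M2 a w vw = qmul a (uc u 0 *: w + uc u 1 *: vw).
Proof.
apply: row4P => j; rewrite !mxE !big_ord_recl big_ord0 !mxE /= !uc_ord.
case: j => [[|[|[|[|k]]]] hj] //=; qE; rewrite /=; ring.
Qed.

Lemma row2 (s t : R) : uc (\row_(i < 2) (if i == 0 :> nat then s else t)) 0 = s /\
   uc (\row_(i < 2) (if i == 0 :> nat then s else t)) 1 = t.
Proof. by rewrite /uc !mxE !inordK. Qed.

Lemma imag_eq (v : quat) : qc v 0 = 0 -> qmk 0 (qc v 1) (qc v 2) (qc v 3) = v.
Proof. by move=> v0; apply qeq; rewrite ?qmk0 ?v0 // ?qmk1 ?qmk2 ?qmk3. Qed.

Lemma Pln_conv a al b be : a != 0 -> b != 0 -> dot a b = 0 -> is_2plane (Pln a al b be).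
Proof.
move=> ha hb hab; have hNa := qnorm_neq0 ha; have hNb := qnorm_neq0 hb.
set v := qmul (qconj a) b.
have v0 : qc v 0 = 0 by rewrite -hab /v; qE; ring.
set vv := qmk 0 (qc v 1) (qc v 2) (qc v 3).
have hvv : vv = v by apply: imag_eq.
have vvn : vv != 0 by rewrite hvv qmul_neq0 // qconj_eq0.
set w := perp vv.
have hw : w != 0 by apply: perp_neq0.
set vw := qmul vv w.
have hNvv := qnorm_neq0 vvn; have hNw := qnorm_neq0 hw.
have hbv : qmul a vv = N a *: b by rewrite hvv /v qmA qmul_conj qmulZl qmul1q.
have dXb X : dot (qmul a X) b = dot X vv.
  apply: (mulfI hNa); rewrite -dotZr -hbv dotMl //.
set p := (al / N a) *: a + (be / N b) *: b.
have hpa : dot p a = al by rewrite /p dotDl !dotZl dotxx dotC hab mulr0 addr0 divfK.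
have hpb : dot p b = be by rewrite /p dotDl !dotZl dotxx hab mulr0 add0r divfK.
exists p, (M2 a w vw); split.
  apply/eqP; apply: inj_row_free => u; rewrite M2E => /qmul_eq0 [/eqP|]; first by rewrite (negbTE ha).
  have -> : uc u 0 *: w + uc u 1 *: vw = qmul (uc u 0 *: qone + uc u 1 *: vv) w by rewrite /vw; qring.
  move=> /qmul_eq0 [|/eqP]; last by rewrite (negbTE hw).
  move=> e; have e0 := congr1 (fun x => qc x 0) e; move: e0; rewrite /= /vv; qE; rewrite mulr0 addr0 mulr1 => u0.
  move: e; rewrite u0 scale0r add0r => /eqP; rewrite scaler_eq0 (negbTE vvn) orbF => /eqP u1.
  apply/rowP => i; rewrite mxE uc_ord.
  by case: i => [[|[|k]] hi] //=.
move=> y; split.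
  case=> [->|[z [-> [hz1 hz2]]]]; first by left.
  right; set x := z - p.
  have hxa : dot x a = 0 by rewrite dotBl hz1 hpa subrr.
  have hxb : dot x b = 0 by rewrite dotBl hz2 hpb subrr.
  set q := qmul (qinv a) x.
  have q0 : qc q 0 = 0.
    rewrite /q /qinv qmulZl qcZ; have -> : qc (qmul (qconj a) x) 0 = dot a x by qE; ring.
    by rewrite dotC hxa mulr0.
  have qv : dot q vv = 0.
    by rewrite /q hvv /v /qinv qmulZl dotZl dotMl hxb !mulr0.
  have E := @perp_expand R (qc v 1) (qc v 2) (qc v 3) q; cbv zeta in E.
  rewrite -/w -/vw q0 qv !mulr0 !scale0r !add0r in E.
  set s := dot q w / N w; set t := dot q vw / (N vv * N w).
  have Eq : q = s *: w + t *: vw.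
    apply: (@scalerI _ _ (N vv * N w)); first by rewrite mulf_neq0.
    rewrite E scalerDr !scalerA; congr (_ *: _ + _ *: _); rewrite /s /t; field.
    by []. by rewrite hNw hNvv.
  exists (\row_(i < 2) (if i == 0 :> nat then s else t)).
  have [r0 r1] := row2 s t.
  by rewrite M2E r0 r1 -Eq /q qmulKl' // /x addrC subrK.
case=> [->|[u ->]]; first by left.
right; exists (p + u *m M2 a w vw); split => //.
rewrite M2E; set X := uc u 0 *: w + uc u 1 *: vw.
have pr1 := @perp_re R (qc v 1) (qc v 2) (qc v 3).
have pr2 := @perp_re2 R (qc v 1) (qc v 2) (qc v 3).
have pr3 := @perp_dot R (qc v 1) (qc v 2) (qc v 3).
have pr4 := @perp_dot2 R (qc v 1) (qc v 2) (qc v 3).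
rewrite -/vv -/w -/vw in pr1 pr2 pr3 pr4.
have X0 : qc X 0 = 0 by rewrite /X qcD !qcZ pr1 pr2 !mulr0 addr0.
have Xv : dot X vv = 0 by rewrite /X dotDl !dotZl pr3 pr4 !mulr0 addr0.
have dXa : dot (qmul a X) a = N a * qc X 0 by qE; ring.
split; rewrite dotDl; [by rewrite dXa X0 mulr0 addr0 | by rewrite dXb Xv addr0].
Qed.

End G6.



Section G7.
Variable R : realType.
Local Notation quat := (quat R).
Local Notation hpoint := (hpoint R).
Local Notation qmul := (@qmul R).
Local Notation qinv := (@qinv R).
Local Notation qconj := (@qconj R).
Local Notation qone := (@qone R).
Local Notation qmk := (@qmk R).
Local Notation qc := (@qc R).
Local Notation N := (@qnorm2 R).
Local Notation dot := (@dot R).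
Local Notation Sph := (@Sph R).
Local Notation two := (@two R).
Local Notation seteq := (@seteq R).

Definition qorbit (p : quat) : hpoint -> Prop :=
  fun y => exists2 a, a != 0 & y = Some (qmul (qmul a p) (qinv a)).

Lemma conj_scal a (r : R) : a != 0 -> qmul (qmul a (r *: qone)) (qinv a) = r *: qone.
Proof. by move=> h; rewrite qmulZr qmulq1 qmulZl qmulV. Qed.

Lemma orbit_real p : qreal p -> seteq (qorbit p) (fun y => y = Some p).
Proof.
case=> e1 [e2 e3].
have ep : p = qc p 0 *: qone by apply qeq; qE; rewrite ?e1 ?e2 ?e3; ring.
move=> y; split.
  by case=> a ha ->; rewrite [in LHS]ep conj_scal // -ep.
move=> ->; exists qone; first exact: qone_neq0.
by rewrite qinv1 qmulq1 qmul1q.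
Qed.

Definition rho_p (p : quat) := qc p 1 ^+ 2 + qc p 2 ^+ 2 + qc p 3 ^+ 2.

Lemma rho_p_neq0 p : ~ qreal p -> rho_p p != 0.
Proof.
move=> hp; apply/eqP => h0; apply: hp.
have s1 := sqr_ge0 (qc p 1); have s2 := sqr_ge0 (qc p 2); have s3 := sqr_ge0 (qc p 3).
rewrite /rho_p in h0.
have t1 : qc p 1 ^+ 2 = 0 by lra.
have t2 : qc p 2 ^+ 2 = 0 by lra.
have t3 : qc p 3 ^+ 2 = 0 by lra.
move: t1 t2 t3 => /eqP; rewrite sqrf_eq0 => /eqP t1 /eqP; rewrite sqrf_eq0 => /eqP t2 /eqP; rewrite sqrf_eq0 => /eqP t3.
by split => //; split.
Qed.

Lemma orbit_in p z a : a != 0 -> qmul a p = qmul z a -> qorbit p (Some z).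
Proof. by move=> ha e; exists a => //; rewrite e qmulKr. Qed.

Lemma orbit_sph p : ~ qreal p ->
  seteq (qorbit p) (Sph qone (qc p 0) (qc p 0 *: qone) (rho_p p)).
Proof.
move=> hp; have hr := rho_p_neq0 hp.
set p0 := qc p 0.
move=> y; split.
  case=> a ha ->; exists (qmul (qmul a p) (qinv a)); split => //.
  have hNa := qnorm_neq0 ha.
  split.
    rewrite dot1 /qinv qmulZr qcZ.
    have -> : qc (qmul (qmul a p) (qconj a)) 0 = N a * p0 by rewrite /p0; qE; ring.
    by rewrite mulrA mulVf // mul1r.
  have -> : qmul (qmul a p) (qinv a) - p0 *: qone = qmul (qmul a (p - p0 *: qone)) (qinv a).
    by rewrite qmulBr qmulBl conj_scal.
  rewrite !qnormM qnorm_inv mulrAC mulfV // mul1r.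
  by rewrite /rho_p /p0; qE; ring.
case=> z [-> [hz1 hz2]].
rewrite dot1 in hz1.
set uu := qmk 0 (qc p 1) (qc p 2) (qc p 3).
set ww := qmk 0 (qc z 1) (qc z 2) (qc z 3).
have hu : p = uu + p0 *: qone by rewrite /uu /p0; qring.
have hw : z = ww + p0 *: qone by apply qeq; rewrite /ww; qE; rewrite ?hz1; ring.
have Nu : N uu = rho_p p by rewrite /uu /rho_p; qE; ring.
have Nw : N ww = rho_p p by rewrite -hz2 hw addrK.
set r := rho_p p in hr Nu Nw.
have uun : uu != 0 by rewrite -qnorm_eq0 Nu.
suff [a ha ea] : exists2 a, a != 0 & qmul a uu = qmul ww a.
  apply: (orbit_in ha); rewrite hu hw qmulDr qmulDl ea qmulZr qmulZl qmulq1 qmul1q //.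
have [a0|ha] := eqVneq (r *: qone - qmul ww uu) 0.
  have e : ww = - uu.
    have uuu : qmul uu uu = - (N uu) *: qone by rewrite /uu; qring.
    have : qmul (qmul ww uu) uu = r *: uu.
      by move/eqP: a0; rewrite subr_eq0 => /eqP <-; rewrite qmulZl qmul1q.
    rewrite -qmA uuu qmulZr qmulq1 Nu scaleNr => /eqP; rewrite -scaleNr.
    have Ww : (- r) *: ww = - (r *: ww) by rewrite scaleNr.
    move/eqP => h.
    apply: (@scalerI _ _ r) => //; rewrite scalerN; apply/eqP; rewrite -eqr_opp opprK.
    by rewrite -scaleNr h.
  exists (perp uu); first exact: perp_neq0.
  by rewrite (@perp_anti R (qc p 1) (qc p 2) (qc p 3)) e qmulNl.
exists (r *: qone - qmul ww uu) => //.
apply: (eq_mod (D := (r - N ww) *: uu + (N uu - r) *: ww)).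
  by rewrite /uu /ww; qring.
by rewrite Nu Nw subrr !scale0r addr0.
Qed.

Lemma two_orbit p : ~ qreal p -> two (qorbit p).
Proof.
move=> hp; apply: (two_seteq (seteq_sym (orbit_sph hp))).
exists (Some p), (Some (qconj p)); split.
  by exists p; split => //; split; [rewrite dot1 | rewrite /rho_p; qE; ring].
split.
  by exists (qconj p); split => //; split; [rewrite dot1 qcC0 | rewrite /rho_p; qE; ring].
move=> [e]; apply: hp.
have := congr1 (fun x => qc x 1) e; have := congr1 (fun x => qc x 2) e; have := congr1 (fun x => qc x 3) e.
rewrite /= qcC1 qcC2 qcC3 => e3 e2 e1.
by split; [|split]; lra.
Qed.

End G7.


Section M.
Variable R : realType.
Local Notation quat := (quat R).
Local Notation hpoint := (hpoint R).
Local Notation mobius := (@mobius R).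
Local Notation seteq := (@seteq R).
Local Notation two := (@two R).
Local Notation img := (@img R).
Local Notation SphF := (@SphF R).
Local Notation PlnF := (@PlnF R).
Local Notation mI := (@mI R).

Lemma is_2sphere_ext (X Y : hpoint -> Prop) : seteq X Y -> is_2sphere X -> is_2sphere Y.
Proof.
move=> e [c [r [M [h1 [h2 h3]]]]]; exists c, r, M; split => //; split => // y.
by rewrite -e.
Qed.
Lemma is_2plane_ext (X Y : hpoint -> Prop) : seteq X Y -> is_2plane X -> is_2plane Y.
Proof. by move=> e [p [M [h1 h2]]]; exists p, M; split => // y; rewrite -e. Qed.

Lemma SphF_conv X : SphF X -> two X -> is_2sphere X.
Proof.
move=> [m [h [c [rho [hm e]]]]] t; apply: (is_2sphere_ext (seteq_sym e)).
by apply: Sph_conv => //; exact: two_seteq e t.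
Qed.
Lemma PlnF_conv X : PlnF X -> is_2plane X.
Proof.
move=> [a [al [b [be [ha [hb [hab e]]]]]]]; apply: (is_2plane_ext (seteq_sym e)).
exact: Pln_conv.
Qed.

Lemma SphI_img X : SphF X -> two X -> SphF (img (mobius mI) X) \/ PlnF (img (mobius mI) X).
Proof.
move=> [m [h [c [rho [hm e]]]]] t.
have e' := seteq_image (mobius mI) e.
have [H|H] := Sph_I hm (two_seteq e t).
  by left; apply: SphF_ext H; apply: seteq_sym.
by right; apply: PlnF_ext H; apply: seteq_sym.
Qed.

Lemma GL_injective g : inGL2 g -> injective (mobius g).
Proof. by move=> G x y; apply: mobius_inj. Qed.

End M.

Unset Implicit Arguments.

Theorem mainTheorem2 (R : realType) (q1 q2 q3 q4 q1' q2' q3' : hpoint R) :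
  q1 <> q2 -> q1 <> q3 -> q1 <> q4 -> q2 <> q3 -> q2 <> q4 -> q3 <> q4 ->
  q1' <> q2' -> q1' <> q3' -> q2' <> q3' ->
  let S := fun y : hpoint R =>
    exists g : qmat R, inGL2 g /\ mobius g q1 = q1' /\ mobius g q2 = q2' /\
                       mobius g q3 = q3' /\ mobius g q4 = y in
  (is_2sphere S \/ is_2plane S \/ is_point S) /\
  (is_point S <-> qreal (crossratio q1 q2 q3 q4)).
Proof.
move=> h12 h13 h14 h23 h24 h34 h12' h13' h23' S.
have [B [GB [B1 [B2 [B3 B4]]]]] := normalize h12 h13 h14 h23 h24 h34.
have [F [GF [F1 [F2 [F3 Fshape]]]]] := target h12' h13' h23'.
set p := crossratio q1 q2 q3 q4 in B4 *.
have SE : seteq S (img (mobius F) (qorbit p)).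
  move=> y; rewrite /S (Schar GB B1 B2 B3 GF F1 F2 F3 B4); split.
    by case=> a ha ->; exists (Some (qmul (qmul a p) (qinv a))); split => //; exists a.
  by case=> _ [[a ha ->] ->]; exists a.
have [hp|hp] : qreal p \/ ~ qreal p.
  rewrite /qreal; case: (eqVneq (qc p 1) 0) => e1; last by right; case=> /eqP; rewrite (negbTE e1).
  case: (eqVneq (qc p 2) 0) => e2; last by right; case=> _ [] /eqP; rewrite (negbTE e2).
  case: (eqVneq (qc p 3) 0) => e3; last by right; case=> _ [] _ /eqP; rewrite (negbTE e3).
  by left.
  have e := seteq_trans SE (seteq_image (mobius F) (orbit_real hp)).
  have pt : is_point S.
    exists (mobius F (Some p)) => y; rewrite e; split; first by case=> x [-> ->].
    by move=> ->; exists (Some p).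
  by split; [right; right | split].
have t : two S := two_seteq (seteq_sym SE) (two_image (GL_injective GF) (two_orbit hp)).
have npt : ~ is_point S.
  move=> [z hz]; case: t => x [y [hx [hy hxy]]]; apply: hxy.
  by rewrite (proj1 (hz x) hx) (proj1 (hz y) hy).
split; last by split => [/npt|/hp].
have OS : SphF (qorbit p).
  exists (qone R), (qc p 0), (qc p 0 *: qone R), (rho_p p); split; [exact: qone_neq0 | exact: orbit_sph].
case: Fshape => [[t0 [al [hal EF]]] | [c [be [al [hal EF]]]]].
  have eF x : mobius F x = mobius (mT t0) (mobius (mR al) x).
    by rewrite EF /F1 mobius_mul //; exact: mR_GL.
  have c1 : seteq (img (fun x => mobius (mT t0) (mobius (mR al) x)) (qorbit p)) S.
    apply: seteq_sym; apply: seteq_trans SE _; apply: image_ext => x; exact: eF.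
  have SS : SphF S.
    have H : SphF (img (mobius (mT t0)) (img (mobius (mR al)) (qorbit p))).
      by apply: SphF_T; apply: SphF_R.
    exact: SphF_ext c1 (SphF_ext (seteq_sym (image_comp _ _ _)) H).
  by left; apply: SphF_conv.
have eF x : mobius F x = mobius (mT c) (mobius (mI R) (mobius (mT be) (mobius (mR al) x))).
  rewrite EF /F2 !mobius_mul //; try exact: mR_GL; try exact: mT_GL.
    by apply: GL_mul; [exact: mT_GL | exact: mR_GL].
  by apply: GL_mul; [exact: (mI_GL R) | apply: GL_mul; [exact: mT_GL | exact: mR_GL]].
set X1 := img (mobius (mR al)) (qorbit p).
set X2 := img (mobius (mT be)) X1.
have S1 : SphF X1 by apply: SphF_R.
have S2 : SphF X2 by apply: SphF_T.
have T2 : two X2.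
  apply: two_image; first exact: GL_injective (mT_GL _).
  apply: two_image; first exact: GL_injective (mR_GL hal).
  exact: two_orbit.
have c1 : seteq (img (mobius (mT c)) (img (mobius (mI R)) X2)) S.
  apply: seteq_sym; apply: seteq_trans SE _.
  apply: seteq_trans (image_ext _ eF) _.
  apply: seteq_trans (image_comp _ _ _) _; apply: seteq_image.
  apply: seteq_trans (image_comp _ _ _) _; apply: seteq_image.
  exact: image_comp.
have [H|H] := SphI_img S2 T2.
  by left; apply: SphF_conv => //; apply: SphF_ext c1 _; apply: SphF_T.
by right; left; apply: PlnF_conv; apply: PlnF_ext c1 _; apply: PlnF_T.
Qed.
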